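(* There exists $\varphi_1>\frac{\pi}{2}$ such that for every $s\in\mathbb C$ with $\frac{\pi}{2}<|\arg s|<\varphi_1$ there exists $\sigma>0$ with $s\in\Omega_\sigma$ and $\sigma<(\Re\sqrt s)^2$.
   Context: $\sqrt z$ denotes the branch with $\Re\sqrt z>0$ for $|\arg z|<\pi$. For $\sigma>0$: $\Omega^1_\sigma=\{s:\Re s\le0,\ \sigma<|\Im s|\}\cup\{s:\Re s>0,\ \sigma<|s|\}$; $\Omega^2_\sigma=\{s:\ \sigma<|s|+\Re s,\ \sigma>\frac{-\Re(s)|s|}{2(|s|+\Re s)}\}$; $\Omega^3_\sigma=\{s\neq0:\ \sigma(|s|-\sigma+\Re s)-(\sigma(1+\frac{\Re s}{|s|})+\frac12\Re s)^2>0\}$; $\Omega_\sigma=\Omega^1_\sigma\cap(\Omega^2_\sigma\cup\Omega^3_\sigma)$. *)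

(* Defs.v *)
From Stdlib Require Import Reals Lra.
Open Scope R_scope.

Definition Cplx : Type := (R * R)%type.
Definition Re (s : Cplx) : R := fst s.
Definition Im (s : Cplx) : R := snd s.
Definition Cmod (s : Cplx) : R := sqrt (Re s ^ 2 + Im s ^ 2).

(* Principal argument, values in (-PI, PI]; Arg 0 = 0 (irrelevant here). *)
Definition Arg (s : Cplx) : R :=
  let x := Re s in let y := Im s in
  if Rlt_dec 0 x then atan (y / x)
  else if Rlt_dec x 0 then
    (if Rle_dec 0 y then atan (y / x) + PI else atan (y / x) - PI)
  else if Rlt_dec 0 y then PI / 2
  else if Rlt_dec y 0 then - (PI / 2)
  else 0.

(* Principal square root: the branch with Re sqrt z > 0 for |arg z| < PI,
   i.e. sqrt z = sqrt((|z|+Re z)/2) + i sgn(Im z) sqrt((|z|-Re z)/2). *)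
Definition Csqrt (s : Cplx) : Cplx :=
  (sqrt ((Cmod s + Re s) / 2),
   (if Rlt_dec (Im s) 0 then - sqrt ((Cmod s - Re s) / 2)
    else sqrt ((Cmod s - Re s) / 2))).

Definition Omega1 (sigma : R) (s : Cplx) : Prop :=
  (Re s <= 0 /\ sigma < Rabs (Im s)) \/ (0 < Re s /\ sigma < Cmod s).

Definition Omega2 (sigma : R) (s : Cplx) : Prop :=
  sigma < Cmod s + Re s /\
  sigma > - Re s * Cmod s / (2 * (Cmod s + Re s)).

Definition Omega3 (sigma : R) (s : Cplx) : Prop :=
  s <> (0, 0) /\
  sigma * (Cmod s - sigma + Re s)
    - (sigma * (1 + Re s / Cmod s) + / 2 * Re s) ^ 2 > 0.

Definition Omega (sigma : R) (s : Cplx) : Prop :=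
  Omega1 sigma s /\ (Omega2 sigma s \/ Omega3 sigma s).

(* Main.v *)
Require Import Defs.
From Stdlib Require Import Reals Lra Psatz.
Open Scope R_scope.

Lemma atan_le_inv a b : atan a < atan b -> a < b.
Proof.
  intro H. destruct (Rlt_or_le a b) as [h|h]; auto.
  destruct h as [h|h]. apply atan_increasing in h; lra. subst; lra.
Qed.

Lemma arg_info s : PI/2 < Rabs (Arg s) < PI - atan 4 ->
  Re s < 0 /\ 4 * (- Re s) < Rabs (Im s).
Proof.
  intros [H1 H2]. unfold Arg in *.
  set (x := Re s) in *. set (y := Im s) in *.
  pose proof PI_RGT_0.
  destruct (Rlt_dec 0 x) as [hx|hx].
  { pose proof (atan_bound (y/x)). apply Rabs_def2 in H1 || idtac.
    destruct (Rle_or_lt 0 (atan (y/x))).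
    rewrite Rabs_pos_eq in H1 by lra. lra.
    rewrite Rabs_left in H1 by lra. lra. }
  destruct (Rlt_dec x 0) as [hx'|hx'].
  - destruct (Rle_dec 0 y) as [hy|hy].
    + assert (y/x <= 0).
      { unfold Rdiv. assert (0 < / - x) by (apply Rinv_0_lt_compat; lra).
        replace (/ x) with (- / - x) by (field; lra). nra. }
      pose proof (atan_bound (y/x)).
      rewrite Rabs_pos_eq in H2 by lra.
      assert (HA : atan (y/x) < atan (- (4))) by (rewrite atan_opp; lra).
      apply atan_le_inv in HA.
      assert (y = (y/x) * x) by (field; lra).
      split; auto. rewrite Rabs_pos_eq by lra. nra.
    + assert (0 < y/x).
      { unfold Rdiv. assert (0 < / - x) by (apply Rinv_0_lt_compat; lra).
        replace (/ x) with (- / - x) by (field; lra). nra. }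
      pose proof (atan_bound (y/x)).
      pose proof (atan_increasing 0 (y/x) H0) as HB. rewrite atan_0 in HB.
      rewrite Rabs_left in H2 by lra.
      assert (HA : atan 4 < atan (y/x)) by lra.
      apply atan_le_inv in HA.
      assert (y = (y/x) * x) by (field; lra).
      split; auto. rewrite Rabs_left by lra. nra.
  - exfalso.
    destruct (Rlt_dec 0 y).
    rewrite Rabs_pos_eq in H1 by lra. lra.
    destruct (Rlt_dec y 0).
    rewrite Rabs_Ropp, Rabs_pos_eq in H1 by lra. lra.
    rewrite Rabs_R0 in H1. lra.
Qed.

Theorem mainTheorem19 :
  exists phi1 : R, PI / 2 < phi1 /\
    forall s : Cplx, PI / 2 < Rabs (Arg s) < phi1 ->
      exists sigma : R, 0 < sigma /\ Omega sigma s /\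
        sigma < (Re (Csqrt s)) ^ 2.
Proof.
  exists (PI - atan 4). split.
  { pose proof (atan_bound 4). lra. }
  intros s Hs. apply arg_info in Hs. destruct Hs as [hx hy].
  unfold Omega, Omega1, Omega2, Csqrt; simpl Re.
  unfold Cmod.
  set (x := Re s) in *. set (y := Im s) in *.
  set (a := Rabs y).
  assert (ha : a * a = y ^ 2) by (unfold a; destruct (Rle_or_lt 0 y);
     [rewrite Rabs_pos_eq by lra | rewrite Rabs_left by lra]; ring).
  set (r := sqrt (x ^ 2 + y ^ 2)).
  assert (hr2 : r * r = x ^ 2 + y ^ 2) by (apply sqrt_sqrt; nra).
  assert (hr0 : 0 <= r) by apply sqrt_pos.
  set (t := - x). assert (ht : 0 < t) by (unfold t; lra).
  assert (hra : a < r) by nra.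
  assert (ha0 : 0 <= a) by apply Rabs_pos.
  assert (hrt : r <= a + t).
  { destruct (Rle_or_lt r (a + t)) as [h|h]; auto.
    assert ((a+t)*(a+t) < r * r) by (apply Rmult_le_0_lt_compat; lra).
    unfold t in *; nra. }
  assert (hxt : x ^ 2 = t * t) by (unfold t; ring).
  assert (h4 : 4 * t < a) by (unfold t, a in *; lra).
  assert (e1 : t * r <= t * (a + t)) by (apply Rmult_le_compat_l; lra).
  assert (e2 : 4 * t * t < a * t) by nra.
  assert (e3 : 4 * t * a < a * a) by nra.
  assert (key : t * r < (r - t) ^ 2) by nra.
  assert (hre : sqrt ((r + x) / 2) ^ 2 = (r - t) / 2).
  { simpl. rewrite Rmult_1_r, sqrt_sqrt; unfold t in *; lra. }
  rewrite hre.
  set (L := - x * r / (2 * (r + x))).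
  assert (hL : L = t * r / (2 * (r - t))) by (unfold L, t; f_equal; ring).
  assert (hL0 : 0 < L) by (rewrite hL; apply Rdiv_lt_0_compat; nra).
  assert (hLU : L < (r - t) / 2).
  { rewrite hL. apply Rmult_lt_reg_r with (2 * (r - t)). lra.
    unfold Rdiv. rewrite Rmult_assoc, Rinv_l by lra. nra. }
  exists ((L + (r - t) / 2) / 2). repeat split.
  - lra.
  - left. split. unfold t in *; lra. fold a. lra.
  - left. split. unfold t in *; lra. replace (r + x) with (r - t) by (unfold t; ring). rewrite <- hL. lra.
  - lra.
Qed.
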